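(* Let $\bm{A}=[\bm{A}_1\ \bm{A}_2]$ have full column rank with $\bm{A}_j^\top\bm{A}_j=\bm{I}_j$ and $\bm{C}:=\bm{A}_2^\top\bm{A}_1\ne0$. Let $\gamma_1^*:=\dfrac{2}{1+\sqrt{1-\lambda_1(\bm{C}\bm{C}^\top)}}$. Then $\gamma_1^*-1<\rho(\bm{M}(1,1))$ and $\min_{\gamma_1>0}\rho(\bm{M}(\gamma_1,\gamma_1))=\rho(\bm{M}(\gamma_1^*,\gamma_1^* ))=\gamma_1^*-1.$
   Context: $\rho$: spectral radius; $\lambda_1$: largest eigenvalue. $\bm{M}(\gamma_1,\gamma_2)=\begin{bmatrix}(1-\gamma_1)\bm{I}_1&-\gamma_1\bm{C}^\top\\-\gamma_2(1-\gamma_1)\bm{C}&(1-\gamma_2)\bm{I}_2+\gamma_1\gamma_2\bm{C}\bm{C}^\top\end{bmatrix}$, the two-block gradient descent iteration matrix with stepsizes $\gamma_1,\gamma_2$. *)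

(* Defs.v *)
From HB Require Import structures.
From mathcomp Require Import all_boot all_order all_algebra.
From mathcomp Require Import complex.
From mathcomp Require Import classical_sets reals.

Set Implicit Arguments.
Unset Strict Implicit.
Unset Printing Implicit Defensive.

Import Order.TTheory GRing.Theory Num.Theory.
Local Open Scope ring_scope.
Local Open Scope classical_set_scope.

Definition cmod (R : realType) (z : R[i]) : R :=
  let: Complex a b := z in Num.sqrt (a ^+ 2 + b ^+ 2).

Definition ceigenvalue (R : realType) (n : nat) (M : 'M[R]_n) (z : R[i]) : Prop :=
  eigenvalue (map_mx (real_complex R) M) z.

Definition spectral_radius (R : realType) (n : nat) (M : 'M[R]_n) : R :=
  sup [set cmod z | z in [set z : R[i] | ceigenvalue M z]].

Definition lambda_max (R : realType) (n : nat) (S : 'M[R]_n) : R :=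
  sup [set a : R | eigenvalue S a].

Definition gd_iter_mx (R : realType) (n1 n2 : nat) (C : 'M[R]_(n2, n1)) (g1 g2 : R)
  : 'M[R]_(n1 + n2) :=
  block_mx ((1 - g1)%:M) (- g1 *: C^T)
           (- (g2 * (1 - g1)) *: C) ((1 - g2)%:M + (g1 * g2) *: (C *m C^T)).
Arguments gd_iter_mx {R n1 n2} C g1 g2.
Arguments spectral_radius {R n} M.
Arguments lambda_max {R n} S.

(* Main.v *)
Require Import Defs.
From HB Require Import structures.
From mathcomp Require Import all_boot all_order all_algebra.
From mathcomp Require Import complex.
From mathcomp Require Import classical_sets reals.
From mathcomp Require Import boolp ring lra.
Import Order.TTheory GRing.Theory Num.Theory.
Set Implicit Arguments.
Unset Strict Implicit.
Unset Printing Implicit Defensive.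
Local Open Scope ring_scope.

Definition GM (F : fieldType) (n1 n2 : nat) (C : 'M[F]_(n2, n1)) (g : F)
  : 'M[F]_(n1 + n2) :=
  block_mx ((1 - g)%:M) (- g *: C^T)
           (- (g * (1 - g)) *: C) ((1 - g)%:M + (g * g) *: (C *m C^T)).

Lemma eigenvalue_tr (F : fieldType) n (A : 'M[F]_n) a :
  eigenvalue A^T a = eigenvalue A a.
Proof.
rewrite !eigenvalue_root_char /char_poly -det_tr /char_poly_mx.
by rewrite linearB /= tr_scalar_mx map_trmx trmxK.
Qed.

Lemma GM_trE (F : fieldType) n1 n2 (C : 'M[F]_(n2, n1)) g :
  (GM C g)^T = block_mx ((1 - g)%:M) (- (g * (1 - g)) *: C^T)
                        (- g *: C) ((1 - g)%:M + (g * g) *: (C *m C^T)).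
Proof.
rewrite /GM tr_block_mx !tr_scalar_mx !linearZ /= trmxK linearD /= tr_scalar_mx.
by rewrite linearZ /= trmx_mul trmxK.
Qed.

Lemma GM_rowE (F : fieldType) n1 n2 (C : 'M[F]_(n2, n1)) g (x : 'rV_n1) (y : 'rV_n2) :
  row_mx x y *m (GM C g)^T =
  row_mx ((1 - g) *: x - g *: (y *m C))
         (- (g * (1 - g)) *: (x *m C^T) + (1 - g) *: y + (g * g) *: (y *m C *m C^T)).
Proof.
rewrite GM_trE mul_row_block !mul_mx_scalar mulmxDr mul_mx_scalar.
rewrite -!scalemxAr mulmxA scaleNr; congr row_mx.
by rewrite addrA.
Qed.

Lemma GM_eig (F : fieldType) n1 n2 (C : 'M[F]_(n2, n1)) g nu l (x : 'rV_n1) :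
  x != 0 -> x *m C^T *m C = nu *: x -> l != 0 -> l + g - 1 != 0 ->
  (l + g - 1) ^+ 2 = g ^+ 2 * l * nu -> eigenvalue (GM C g) l.
Proof.
move=> x0 HxC l0 d0 Hd.
have g0 : g != 0.
  apply/negP=> /eqP g0; have : (l + g - 1) ^+ 2 = 0 by rewrite Hd g0 expr2 !mul0r.
  by move/eqP; rewrite sqrf_eq0 (negPf d0).
have Hnu : nu = (l + g - 1) ^+ 2 / (g ^+ 2 * l).
  by rewrite Hd mulrC mulKf // mulf_neq0 // expf_neq0.
rewrite -eigenvalue_tr; apply/eigenvalueP.
exists (row_mx x ((- (g * l / (l + g - 1))) *: (x *m C^T))); last first.
  by rewrite row_mx_eq0 negb_and x0.
rewrite GM_rowE scale_row_mx; congr row_mx.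
  rewrite -scalemxAl HxC !scalerA -scalerBl; congr (_ *: x).
  by rewrite Hnu; field; rewrite d0 l0 g0.
rewrite -!scalemxAl HxC -scalemxAl !scalerA -!scalerDl; congr (_ *: _).
by rewrite Hnu; field; rewrite d0 l0 g0.
Qed.

Lemma scale_comb (F : fieldType) (V : lmodType F) (u v : V) a1 b1 a2 :
  a1 *: u + b1 *: v + a2 *: u - b1 *: v = (a1 + a2) *: u.
Proof. by rewrite addrAC addrK -scalerDl. Qed.

Lemma scale_solve (F : fieldType) (V : lmodType F) (w x : V) a b :
  a != 0 -> a *: w = b *: x -> w = (b / a) *: x.
Proof.
move=> a0 h; by rewrite mulrC -scalerA -h scalerA mulVf // scale1r.
Qed.

Lemma GM_eig_inv (F : fieldType) n1 n2 (C : 'M[F]_(n2, n1)) g l :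
  eigenvalue (GM C g) l -> g != 0 -> l != 0 -> l + g - 1 != 0 ->
  exists2 x : 'rV_n1, x != 0 &
     x *m C^T *m C = ((l + g - 1) ^+ 2 / (g ^+ 2 * l)) *: x.
Proof.
rewrite -eigenvalue_tr => /eigenvalueP [v Hv v0] g0 l0 d0.
move: Hv v0; rewrite -[v]hsubmxK; set x := lsubmx v; set y := rsubmx v.
rewrite GM_rowE scale_row_mx => /eq_row_mx [E1 E2].
rewrite row_mx_eq0 negb_and.
set d := l + g - 1 in d0 *.
have E1' : g *: (y *m C) = ((1 - g) - l) *: x.
  by rewrite scalerBl -E1 opprB addrC subrK.
have H3 : (g * g) *: (y *m C *m C^T) = (g * ((1 - g) - l)) *: (x *m C^T).
  by rewrite -scalerA scalemxAl E1' -scalemxAl scalerA.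
rewrite H3 in E2.
have E2' : d *: y = - (g * l) *: (x *m C^T).
  have -> : d = l - (1 - g) by rewrite /d; ring.
  rewrite scalerBl -E2 scale_comb; congr (_ *: _); ring.
move=> v0; have x0 : x != 0.
  apply/negP => /eqP x0; move: v0; rewrite x0 eqxx /=.
  move: E2'; rewrite x0 mul0mx scaler0 => /eqP; rewrite scaler_eq0 (negPf d0) /=.
  by move=> ->.
exists x => //.
have -> : (d ^+ 2 / (g ^+ 2 * l)) = (- (d * d)) / (- (g * g * l)).
  by field; rewrite oppr_eq0 !mulf_neq0 ?l0 ?g0.
apply: (@scale_solve _ _ _ _ (- (g * g * l)) (- (d * d))); first by rewrite oppr_eq0 !mulf_neq0.
have : (g * d) *: (y *m C) = (d * ((1 - g) - l)) *: x.
  by rewrite [g * d]mulrC -[(d * g) *: _]scalerA E1' scalerA.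
rewrite -scalerA scalemxAl E2' -scalemxAl -!mulmxA !scalerA => h.
have -> : - (g * g * l) = g * - (g * l) by ring.
by rewrite h; congr (_ *: _); rewrite /d; ring.
Qed.

Lemma map_GM (F K : fieldType) (f : {rmorphism F -> K}) n1 n2 (C : 'M[F]_(n2, n1)) g :
  map_mx f (GM C g) = GM (map_mx f C) (f g).
Proof.
rewrite /GM map_block_mx !map_mxZ map_mxD !map_scalar_mx map_mxZ map_mxM map_trmx.
by rewrite !rmorphB !rmorphN !rmorphM ?rmorphB rmorph1.
Qed.

Section Real.
Variable R : realType.
Local Open Scope classical_set_scope.

Lemma gdE n1 n2 (C : 'M[R]_(n2, n1)) g : gd_iter_mx C g g = GM C g.
Proof. by []. Qed.

Lemma ceig_real n (M : 'M[R]_n) r : ceigenvalue M (real_complex R r) = eigenvalue M r.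
Proof. by rewrite /ceigenvalue (eigenvalue_map (real_complex R)). Qed.


Lemma finite_max (E : set R) (s : seq R) :
  (forall x, E x -> x \in s) -> (exists x, E x) ->
  exists2 m, E m & forall x, E x -> x <= m.
Proof.
elim: s E => [|a s IH] E HE [x Ex]; first by move: (HE x Ex).
case: (pselect (exists y, E y /\ y != a)) => [[y [Ey ya]]|nE].
  have [|m [Em ma] hm] := IH [set y | E y /\ y != a] _ (ex_intro _ y (conj Ey ya)).
    by move=> z [Ez za]; move: (HE z Ez); rewrite in_cons (negPf za).
  case: (pselect (E a)) => Ea.
    exists (if a <= m then m else a); first by case: ifP.
    move=> z Ez; case: (eqVneq z a) => [->|za].
      by case: ifP => // /negbT; rewrite -ltNge => /ltW.
    have := hm z (conj Ez za); case: ifP => // /negbT; rewrite -ltNge => /ltW h1 h2.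
    exact: le_trans h2 h1.
  exists m => // z Ez; case: (eqVneq z a) => [za|za]; last exact: hm.
  by move: Ea; rewrite -za.
have Hall : forall z, E z -> z = a.
  by move=> z Ez; apply/eqP; apply/negPn/negP => za; apply: nE; exists z.
exists a; first by rewrite -(Hall x Ex).
by move=> z /Hall ->.
Qed.

Lemma sup_max (E : set R) m : E m -> (forall x, E x -> x <= m) -> sup E = m.
Proof.
move=> Em hm; apply/le_anti/andP; split.
  by apply: ge_sup; [exists m | move=> x /hm].
by apply: sup_upper_bound => //; split; [exists m | exists m => x /hm].
Qed.

Lemma ceig_finite n (A : 'M[R[i]]_n) :
  exists s : seq R[i], forall z, eigenvalue A z -> z \in s.
Proof.
have [s Hs] := closed_field_poly_normal (char_poly A).
exists s => z; rewrite eigenvalue_root_char Hs (monicP (char_poly_monic A)) scale1r.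
by rewrite root_prod_XsubC.
Qed.

Lemma srad_max n (M : 'M[R]_n) :
  (exists z, ceigenvalue M z) ->
  exists z, ceigenvalue M z /\ spectral_radius M = cmod z /\
       forall w, ceigenvalue M w -> cmod w <= cmod z.
Proof.
move=> [z0 Hz0].
have [s Hs] := ceig_finite (map_mx (real_complex R) M).
have H1 : forall x, [set cmod z | z in [set z | ceigenvalue M z]] x ->
    x \in map (@cmod R) s.
  by move=> x [z Hz <-]; apply: map_f; apply: Hs.
have H2 : exists x, [set cmod z | z in [set z | ceigenvalue M z]] x.
  by exists (cmod z0), z0.
have [m [z Hz <-] hm] := finite_max H1 H2.
exists z; split => //; split; first by apply: sup_max => //; exists z.
by move=> w Hw; apply: hm; exists w.
Qed.


Definition cdot n (u : 'rV[R[i]]_n) : R[i] := (u *m (map_mx conjc u)^T) 0 0.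

Lemma cdotE n (u : 'rV[R[i]]_n) : cdot u = \sum_j u 0 j * conjc (u 0 j).
Proof. by rewrite /cdot !mxE; apply: eq_bigr => j _; rewrite !mxE. Qed.

Lemma cdot_ge0 n (u : 'rV[R[i]]_n) : 0 <= cdot u.
Proof. by rewrite cdotE; apply: sumr_ge0 => j _; apply: mulcJ_ge0. Qed.

Lemma cdot_eq0 n (u : 'rV[R[i]]_n) : cdot u = 0 -> u = 0.
Proof.
rewrite cdotE => /psumr_eq0P h; apply/matrixP => i j; rewrite mxE ord1.
have /eqP := h (fun i _ => mulcJ_ge0 _) j isT; rewrite mulf_eq0 => /orP [/eqP //|].
by rewrite conjc_eq0 => /eqP.
Qed.

Lemma map_conj_real m n (C : 'M[R]_(m, n)) :
  map_mx conjc (map_mx (real_complex R) C) = map_mx (real_complex R) C.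
Proof. by apply/matrixP => i j; rewrite !mxE conjc_real. Qed.

Lemma S_eig_real n1 n2 (C : 'M[R]_(n2, n1)) z :
  ceigenvalue (C *m C^T) z -> exists2 r, z = real_complex R r & 0 <= r.
Proof.
rewrite /ceigenvalue map_mxM -map_trmx; set Cc := map_mx _ C.
move=> /eigenvalueP [w Hw w0].
have key : z * cdot w = cdot (w *m Cc).
  rewrite /cdot; transitivity ((z *: (w *m (map_mx conjc w)^T)) 0 0).
    by rewrite [RHS]mxE.
  rewrite scalemxAl -Hw map_mxM map_conj_real.
  by rewrite trmx_mul !mulmxA.
have D0 : cdot w != 0 by apply/negP => /eqP /cdot_eq0 w00; move: w0; rewrite w00 eqxx.
have zge0 : 0 <= z.
  have -> : z = cdot (w *m Cc) / cdot w by rewrite -key mulfK.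
  by apply: divr_ge0; apply: cdot_ge0.
move: zge0; rewrite lecE /= => /andP [/eqP Hi Hr].
exists (complex.Re z) => //.
by case: z Hi Hr {key Hw} => a b /= -> _.
Qed.


Lemma prod_const_X (s : seq R[i]) :
  (forall z, z \in s -> z = 0) -> \prod_(z <- s) ('X - z%:P) = 'X^(size s).
Proof.
elim: s => [|a s IH] h; first by rewrite big_nil expr0.
rewrite big_cons IH; last by move=> z zs; apply: h; rewrite in_cons zs orbT.
by rewrite (h a (mem_head _ _)) subr0 exprS.
Qed.

Lemma trace_CCt n1 n2 (C : 'M[R]_(n2, n1)) :
  \tr (C *m C^T) = \sum_i \sum_j C i j ^+ 2.
Proof.
rewrite /mxtrace; apply: eq_bigr => i _; rewrite mxE; apply: eq_bigr => j _.
by rewrite mxE expr2.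
Qed.

Lemma trace_CCt_eq0 n1 n2 (C : 'M[R]_(n2, n1)) : \tr (C *m C^T) = 0 -> C = 0.
Proof.
rewrite trace_CCt => h; apply/matrixP => i j; rewrite mxE.
have h1 := psumr_eq0P (fun i _ => sumr_ge0 _ (fun j _ => sqr_ge0 (C i j))) h.
have h2 := psumr_eq0P (fun j _ => sqr_ge0 (C i j)) (h1 i isT).
by apply/eqP; rewrite -sqrf_eq0 h2.
Qed.

Lemma S_pos_eig n1 n2 (C : 'M[R]_(n2, n1)) :
  C != 0 -> exists2 r, eigenvalue (C *m C^T) r & 0 < r.
Proof.
move=> C0.
case: (pselect (exists z, ceigenvalue (C *m C^T) z /\ z != 0)) => [[z [Hz z0]]|nz].
  have [r zr r0] := S_eig_real Hz.
  exists r; first by rewrite -ceig_real -zr.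
  rewrite lt_def r0 andbT; apply: contra z0; rewrite zr => /eqP ->.
  by rewrite rmorph0.
exfalso; move: C0; apply/negP; rewrite negbK; apply/eqP; apply: trace_CCt_eq0.
move: C nz; case: n2 => [|n] C nz; first by rewrite /mxtrace big_ord0.
set Sc := map_mx (real_complex R) (C *m C^T).
have [s Hs] := closed_field_poly_normal (char_poly Sc).
rewrite (monicP (char_poly_monic Sc)) scale1r in Hs.
have s0 : forall z, z \in s -> z = 0.
  move=> z zs; have : eigenvalue Sc z by rewrite eigenvalue_root_char Hs root_prod_XsubC.
  move=> Hz; apply/eqP; apply/negP => /negP z0; apply: nz; exists z; split => //.
rewrite prod_const_X // in Hs.
have ss : size s = n.+1.
  by have := size_char_poly Sc; rewrite Hs size_polyXn => -[].
have := char_poly_trace Sc (ltn0Sn n); rewrite Hs ss coefXn /=.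
have -> : (n == n.+1) = false by elim: n {C nz Sc Hs ss}.
rewrite /Sc trace_map_mx => /eqP; rewrite eq_sym oppr_eq0 fmorph_eq0 => /eqP //.
Qed.


Definition rdot n (u : 'rV[R]_n) : R := (u *m u^T) 0 0.

Lemma rdotE n (u : 'rV[R]_n) : rdot u = \sum_j u 0 j ^+ 2.
Proof. by rewrite /rdot !mxE; apply: eq_bigr => j _; rewrite !mxE expr2. Qed.

Lemma rdot_ge0 n (u : 'rV[R]_n) : 0 <= rdot u.
Proof. by rewrite rdotE; apply: sumr_ge0 => j _; apply: sqr_ge0. Qed.

Lemma rdot_gt0 n (u : 'rV[R]_n) : u != 0 -> 0 < rdot u.
Proof.
move=> u0; rewrite lt_def rdot_ge0 andbT; apply: contra u0 => /eqP.
rewrite rdotE => /psumr_eq0P h; apply/eqP/matrixP => i j; rewrite mxE ord1.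
have /eqP := h (fun i _ => sqr_ge0 _) j isT; rewrite sqrf_eq0 => /eqP //.
Qed.

Lemma lam_lt1 m n1 n2 (A1 : 'M[R]_(m, n1)) (A2 : 'M[R]_(m, n2)) r :
  \rank (row_mx A1 A2) = (n1 + n2)%N ->
  A1^T *m A1 = 1%:M -> A2^T *m A2 = 1%:M ->
  eigenvalue ((A2^T *m A1) *m (A2^T *m A1)^T) r -> r < 1.
Proof.
move=> Hrk H1 H2 /eigenvalueP [v Hv v0].
set C := A2^T *m A1 in Hv.
set u := v *m A2^T; set p := v *m C.
have pE : p = u *m A1 by rewrite /p /C mulmxA.
have key1 : r * rdot v = rdot p.
  rewrite /rdot; transitivity ((r *: (v *m v^T)) 0 0); first by rewrite [RHS]mxE.
  by rewrite scalemxAl -Hv /p [(v *m C)^T]trmx_mul !mulmxA.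
have ku : rdot u = rdot v.
  by rewrite /rdot /u trmx_mul trmxK -mulmxA [A2^T *m (A2 *m _)]mulmxA H2 mul1mx.
set e := u - p *m A1^T.
have ke : e *m e^T = u *m u^T - p *m p^T.
  have h1 : u *m (p *m A1^T)^T = p *m p^T by rewrite trmx_mul trmxK mulmxA -pE.
  have h2 : p *m A1^T *m u^T = p *m p^T by rewrite -mulmxA -trmx_mul -pE.
  have h3 : p *m A1^T *m (p *m A1^T)^T = p *m p^T.
    by rewrite trmx_mul trmxK mulmxA -[p *m A1^T *m A1]mulmxA H1 mulmx1.
  by rewrite /e linearB /= mulmxBl !mulmxBr h1 h2 h3 subrr subr0.
have e0 : e != 0.
  have eE : e = row_mx (- p) v *m (row_mx A1 A2)^T.
    by rewrite tr_row_mx mul_row_col mulNmx addrC.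
  have rf : row_free (row_mx A1 A2)^T by rewrite /row_free mxrank_tr Hrk.
  by rewrite eE (mulmx_free_eq0 _ rf) row_mx_eq0 negb_and v0 orbT.
have kk : rdot e = rdot v - rdot p.
  by rewrite /rdot ke mxE [X in _ + X]mxE -/(rdot u) ku.
have := rdot_gt0 e0; have := rdot_gt0 v0.
rewrite kk -key1 => hv he; nra.
Qed.


Lemma lam_props m n1 n2 (A1 : 'M[R]_(m, n1)) (A2 : 'M[R]_(m, n2)) :
  \rank (row_mx A1 A2) = (n1 + n2)%N ->
  A1^T *m A1 = 1%:M -> A2^T *m A2 = 1%:M -> A2^T *m A1 != 0 ->
  let C := A2^T *m A1 in
  [/\ eigenvalue (C *m C^T) (lambda_max (C *m C^T)),
      (forall r, eigenvalue (C *m C^T) r -> r <= lambda_max (C *m C^T)),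
      0 < lambda_max (C *m C^T) & lambda_max (C *m C^T) < 1].
Proof.
move=> Hrk H1 H2 C0 C.
have [cs Hcs] := ceig_finite (map_mx (real_complex R) (C *m C^T)).
have HE : forall a, [set a | eigenvalue (C *m C^T) a] a -> a \in map (@complex.Re R) cs.
  move=> a /= Ha; have : real_complex R a \in cs by apply: Hcs; rewrite -/(ceigenvalue _ _) ceig_real.
  by move/(map_f (@complex.Re R)).
have [r0 Hr0 r0pos] := S_pos_eig C0.
have [mx Hm hm] := finite_max HE (ex_intro _ r0 Hr0).
have lE : lambda_max (C *m C^T) = mx by apply: sup_max.
rewrite lE; split => //.
- exact: lt_le_trans r0pos (hm _ Hr0).
- exact: lam_lt1 Hrk H1 H2 Hm.
Qed.

Lemma quad_bound (a b k q : R) : 0 < k -> 0 <= q -> q <= 4 * k ->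
  (a + k) ^+ 2 - b ^+ 2 = q * a -> 2 * (a + k) * b = q * b -> a ^+ 2 + b ^+ 2 = k ^+ 2.
Proof.
move=> k0 q0 q4 hR hI.
have [b0|b0] := eqVneq b 0.
  move: hR; rewrite b0 expr0n /= subr0 addr0 => hR.
  have h1 : (2 * a + 2 * k - q) ^+ 2 = q * (q - 4 * k) by nra.
  have h2 : (2 * a + 2 * k - q) ^+ 2 = 0.
    apply/le_anti/andP; split; last exact: sqr_ge0.
    rewrite h1; nra.
  move/eqP: h2; rewrite sqrf_eq0 => /eqP h3.
  have h4 : q * (q - 4 * k) = 0 by rewrite -h1 h3 expr0n.
  nra.
have h : 2 * (a + k) = q by apply: (mulIf b0); rewrite hI.
nra.
Qed.


Lemma root_ge (l1 w g : R) : 0 < l1 -> 1 < w -> w < 2 -> w ^+ 2 * l1 = 4 * (w - 1) ->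
  0 < g -> 0 <= (g ^+ 2 * l1 - 2 * (g - 1)) ^+ 2 - 4 * (g - 1) ^+ 2 ->
  w - 1 <= (g ^+ 2 * l1 - 2 * (g - 1) + Num.sqrt ((g ^+ 2 * l1 - 2 * (g - 1)) ^+ 2 - 4 * (g - 1) ^+ 2)) / 2.
Proof.
move=> l0 w1 w2 hw g0.
set bq := g ^+ 2 * l1 - 2 * (g - 1).
set disc := bq ^+ 2 - 4 * (g - 1) ^+ 2 => d0.
set q := Num.sqrt disc.
have q0 : 0 <= q by apply: sqrtr_ge0.
have qq : q ^+ 2 = disc by apply: sqr_sqrtr.
set r := (bq + q) / 2.
have rE : 2 * r = bq + q by rewrite /r; field.
have rr : r ^+ 2 - bq * r + (g - 1) ^+ 2 = 0.
  have h : (r ^+ 2 - bq * r + (g - 1) ^+ 2) * 4 = q ^+ 2 - disc by rewrite /r /disc; field.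
  by move: h; rewrite qq subrr => /eqP; rewrite mulf_eq0 pnatr_eq0 orbF => /eqP.
have rb : bq <= 2 * r by rewrite rE lerDl.
have [wg|gw] := leP w g.
  have bq0 : 0 <= bq.
    rewrite leNgt; apply/negP => bqn.
    have h1 : 2 * (g - 1) <= - bq.
      rewrite leNgt; apply/negP => h.
      have : 0 < (2 * (g - 1) + bq) * (2 * (g - 1) - bq) by apply: mulr_gt0; lra.
      rewrite /disc in d0; nra.
    have : 0 < g ^+ 2 * l1 by apply: mulr_gt0 => //; apply: exprn_gt0.
    rewrite /bq in h1; lra.
  have r0 : 0 <= r by nra.
  suff : g - 1 <= r by lra.
  rewrite leNgt; apply/negP => rg.
  have : r ^+ 2 < (g - 1) ^+ 2 by rewrite ltr_pXn2r ?nnegrE //; lra.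
  nra.
set k := g + w - 2.
have [k0|k0] := leP k 0.
  have : 0 <= g ^+ 2 * l1 by apply: mulr_ge0 => //; [apply: exprn_ge0; lra | lra].
  rewrite /k in k0; rewrite /bq in rb; lra.
have h1 : k * w <= 2 * g * (w - 1) by rewrite /k; nra.
have h2 : k ^+ 2 <= g ^+ 2 * l1 * (w - 1).
  have h3 : k ^+ 2 * w ^+ 2 <= g ^+ 2 * l1 * (w - 1) * w ^+ 2.
    have -> : g ^+ 2 * l1 * (w - 1) * w ^+ 2 = (2 * g * (w - 1)) ^+ 2.
      have -> : g ^+ 2 * l1 * (w - 1) * w ^+ 2 = g ^+ 2 * (w - 1) * (w ^+ 2 * l1) by ring.
      by rewrite hw; ring.
    rewrite -exprMn ler_pXn2r ?nnegrE //; nra.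
  by rewrite -(ler_pM2r (_ : 0 < w ^+ 2)) //; apply: exprn_gt0; lra.
rewrite leNgt; apply/negP => rw.
have e : (w - 1 - r) * (w - 1 - (bq - r)) = k ^+ 2 - g ^+ 2 * l1 * (w - 1).
  rewrite /k /bq; move: rr; rewrite /bq => rr'; nra.
have : 0 < (w - 1 - r) * (w - 1 - (bq - r)) by apply: mulr_gt0; lra.
lra.
Qed.


Lemma disc_neg (l1 w g : R) : 0 < l1 -> 1 < w -> w < 2 -> w ^+ 2 * l1 = 4 * (w - 1) ->
  0 < g -> (g ^+ 2 * l1 - 2 * (g - 1)) ^+ 2 - 4 * (g - 1) ^+ 2 < 0 -> w <= g.
Proof.
move=> l0 w1 w2 hw g0.
set bq := g ^+ 2 * l1 - 2 * (g - 1) => hd.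
have gl : 0 < g ^+ 2 * l1 by apply: mulr_gt0 => //; apply: exprn_gt0.
have g1 : 1 < g.
  rewrite ltNge; apply/negP => g1.
  have : 2 * (1 - g) <= bq by rewrite /bq; lra.
  move=> h; have : 4 * (g - 1) ^+ 2 <= bq ^+ 2.
    have -> : 4 * (g - 1) ^+ 2 = (2 * (1 - g)) ^+ 2 by ring.
    rewrite ler_pXn2r ?nnegrE //; lra.
  lra.
have hb : bq < 2 * (g - 1).
  rewrite ltNge; apply/negP => h.
  have : (2 * (g - 1)) ^+ 2 <= bq ^+ 2 by rewrite ler_pXn2r ?nnegrE //; lra.
  lra.
rewrite leNgt; apply/negP => gw.
have f1 : l1 * w < 2.
  have : l1 * w * w = 4 * (w - 1) by rewrite -hw; ring.
  nra.
have : 0 < (w - g) * (4 - l1 * (g + w)) by apply: mulr_gt0; nra.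
have : l1 * w ^+ 2 - 4 * w + 4 = 0 by rewrite mulrC hw; ring.
rewrite /bq in hb; nra.
Qed.

End Real.

Section Cplx.
Variable R : realType.
Local Open Scope complex_scope.
Lemma cmodE (a b : R) : cmod (a +i* b) = Num.sqrt (a ^+ 2 + b ^+ 2). Proof. by []. Qed.
Lemma comp_eq (a b w r : R) :
  ((a +i* b) + real_complex R w - 1) ^+ 2 = (real_complex R w) ^+ 2 * (a +i* b) * real_complex R r ->
  (a + (w - 1)) ^+ 2 - b ^+ 2 = (w ^+ 2 * r) * a /\ 2 * (a + (w - 1)) * b = (w ^+ 2 * r) * b.
Proof.
rewrite !expr2 => h.
have hR := congr1 (@complex.Re R) h; have hI := congr1 (@complex.Im R) h.
simpl in hR, hI.
split; nra.
Qed.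

Lemma croot (g l1 q : R) :
  q ^+ 2 = 4 * (g - 1) ^+ 2 - (g ^+ 2 * l1 - 2 * (g - 1)) ^+ 2 ->
  (((g ^+ 2 * l1 - 2 * (g - 1)) / 2) +i* (q / 2) + real_complex R g - 1) ^+ 2 =
  (real_complex R g) ^+ 2 * (((g ^+ 2 * l1 - 2 * (g - 1)) / 2) +i* (q / 2)) * real_complex R l1.
Proof.
move=> hq; rewrite !expr2 /=.
congr (_ +i* _).
  have hq' : q * q = 4 * (g - 1) ^+ 2 - (g ^+ 2 * l1 - 2 * (g - 1)) ^+ 2 by rewrite -expr2.
  nra.
nra.
Qed.

Lemma upper n1 n2 (C : 'M[R]_(n2, n1)) l1 w z :
  (forall r, eigenvalue (C *m C^T) r -> r <= l1) -> 1 < w ->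
  w ^+ 2 * l1 = 4 * (w - 1) ->
  ceigenvalue (gd_iter_mx C w w) z -> cmod z <= w - 1.
Proof.
move=> hl w1 hw; rewrite /ceigenvalue gdE map_GM => Hz.
set Cc := map_mx (real_complex R) C in Hz *.
set wc := real_complex R w in Hz *.
have wc0 : wc != 0 by rewrite /wc fmorph_eq0 gt_eqF //; lra.
have [->|z0] := eqVneq z 0.
  rewrite (_ : (0 : R[i]) = 0 +i* 0) // cmodE expr0n /= addr0 sqrtr0; lra.
have [d0|d0] := eqVneq (z + wc - 1) 0.
  move/eqP: d0; rewrite -addrA addr_eq0 => /eqP ->.
  rewrite /wc /cmod /=.
  have -> : (- (w - 1)) ^+ 2 + (- (0 - 0)) ^+ 2 = (w - 1) ^+ 2 :> R by ring.
  rewrite sqrtr_sqr ger0_norm //; lra.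
have [x x0 Hx] := GM_eig_inv Hz wc0 z0 d0.
set nu := _ / _ in Hx.
have nu0 : nu != 0 by rewrite mulf_neq0 ?invr_eq0 ?expf_neq0 ?mulf_neq0.
have hS : eigenvalue (map_mx (real_complex R) (C *m C^T)) nu.
  have e : map_mx (real_complex R) (C *m C^T) = Cc *m Cc^T.
    by rewrite map_mxM map_trmx.
  rewrite e; apply/eigenvalueP; exists (x *m Cc^T).
    by rewrite mulmxA Hx -scalemxAl.
  apply/negP => /eqP h0; move: Hx; rewrite h0 mul0mx => /eqP.
  by rewrite eq_sym scaler_eq0 (negPf nu0) (negPf x0).
have [r nuE r0] := S_eig_real hS.
have rl : r <= l1 by apply: hl; rewrite -ceig_real -nuE.
have hrel : (z + wc - 1) ^+ 2 = wc ^+ 2 * z * real_complex R r.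
  by rewrite -nuE /nu; field; rewrite z0 wc0.
move: hrel; case: z {Hz z0 d0 Hx nu nu0 hS nuE} => a b /comp_eq [hR hI].
rewrite cmodE.
have q4 : w ^+ 2 * r <= 4 * (w - 1).
  rewrite -hw ler_wpM2l //; exact: exprn_ge0 (ltW (lt_trans ltr01 w1)).
have q0 : 0 <= w ^+ 2 * r by apply: mulr_ge0 => //; apply: exprn_ge0; lra.
have w10 : 0 < w - 1 by lra.
rewrite (quad_bound w10 q0 q4 hR hI) sqrtr_sqr ger0_norm //; lra.
Qed.

Lemma lower n1 n2 (C : 'M[R]_(n2, n1)) l1 w g :
  eigenvalue (C *m C^T) l1 -> 0 < l1 -> 1 < w -> w < 2 ->
  w ^+ 2 * l1 = 4 * (w - 1) -> 0 < g ->
  exists z, ceigenvalue (gd_iter_mx C g g) z /\ w - 1 <= cmod z.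
Proof.
move=> /eigenvalueP [v Hv v0] l0 w1 w2 hw g0.
set x := v *m C.
have Hx : x *m C^T *m C = l1 *: x.
  by rewrite /x -[v *m C *m C^T]mulmxA Hv -scalemxAl.
have x0 : x != 0.
  apply/negP => /eqP h; have : x *m C^T = l1 *: v by rewrite /x -mulmxA Hv.
  rewrite h mul0mx => /eqP; rewrite eq_sym scaler_eq0 (negPf v0) orbF gt_eqF //.
have gl : 0 < g ^+ 2 * l1 by apply: mulr_gt0 => //; apply: exprn_gt0.
set bq := g ^+ 2 * l1 - 2 * (g - 1).
have [dpos|dneg] := leP 0 (bq ^+ 2 - 4 * (g - 1) ^+ 2).
  have rge := root_ge l0 w1 w2 hw g0 dpos.
  set q := Num.sqrt _ in rge.
  have qq : q ^+ 2 = bq ^+ 2 - 4 * (g - 1) ^+ 2 by apply: sqr_sqrtr.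
  set r := (_ + q) / 2 in rge.
  have rr : (r + g - 1) ^+ 2 = g ^+ 2 * r * l1.
    have h : ((r + g - 1) ^+ 2 - g ^+ 2 * r * l1) * 4 = q ^+ 2 - (bq ^+ 2 - 4 * (g - 1) ^+ 2).
      by rewrite /r /bq; field.
    move: h; rewrite qq subrr => /eqP; rewrite mulf_eq0 pnatr_eq0 orbF subr_eq0.
    by move/eqP.
  have r0 : 0 < r by lra.
  exists (real_complex R r); split.
    rewrite ceig_real gdE; apply: (GM_eig x0 Hx); first by rewrite gt_eqF.
      apply/negP => /eqP h; move: rr; rewrite h expr0n /= => /eqP.
      by rewrite eq_sym mulf_eq0 !gt_eqF // mulr_gt0 // exprn_gt0.
    exact: rr.
  rewrite (_ : real_complex R r = r +i* 0) // cmodE expr0n /= addr0 sqrtr_sqr.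
  by rewrite ger0_norm //; lra.
have gw := disc_neg l0 w1 w2 hw g0 dneg.
set q := Num.sqrt (4 * (g - 1) ^+ 2 - bq ^+ 2).
have qq : q ^+ 2 = 4 * (g - 1) ^+ 2 - bq ^+ 2 by apply: sqr_sqrtr; lra.
have q0 : 0 < q by rewrite sqrtr_gt0; lra.
exists ((bq / 2) +i* (q / 2)); split.
  rewrite /ceigenvalue gdE map_GM.
  apply: (GM_eig (nu := real_complex R l1) (x := map_mx (real_complex R) x)).
  - by rewrite map_mx_eq0.
  - transitivity (map_mx (real_complex R) (x *m C^T *m C)); first by rewrite !map_mxM map_trmx.
    by rewrite Hx map_mxZ.
  - apply/eqP => h; have := congr1 (@complex.Im R) h => /=; lra.
  - apply/eqP => h; have := congr1 (@complex.Im R) h => /=; lra.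
  - exact: croot.
rewrite cmodE.
have -> : (bq / 2) ^+ 2 + (q / 2) ^+ 2 = (g - 1) ^+ 2.
  by rewrite !expr_div_n qq; field.
rewrite sqrtr_sqr ger0_norm; lra.
Qed.

End Cplx.

Theorem mainTheorem10 (R : realType) (m n1 n2 : nat)
  (A1 : 'M[R]_(m, n1)) (A2 : 'M[R]_(m, n2)) :
  \rank (row_mx A1 A2) = (n1 + n2)%N ->
  A1^T *m A1 = 1%:M ->
  A2^T *m A2 = 1%:M ->
  A2^T *m A1 != 0 ->
  let C := A2^T *m A1 in
  let gs := 2 / (1 + Num.sqrt (1 - lambda_max (C *m C^T))) in
  gs - 1 < spectral_radius (gd_iter_mx C 1 1) /\
  (forall g : R, 0 < g ->
     spectral_radius (gd_iter_mx C gs gs) <= spectral_radius (gd_iter_mx C g g)) /\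
  spectral_radius (gd_iter_mx C gs gs) = gs - 1.
Proof.
move=> Hrk H1 H2 C0 C gs.
have [Hl1 Hub lpos llt1] := lam_props Hrk H1 H2 C0.
rewrite -/C in Hl1 Hub lpos llt1.
have gsdef : gs = 2 / (1 + Num.sqrt (1 - lambda_max (C *m C^T))) by [].
clearbody gs.
set l1 := lambda_max (C *m C^T) in gsdef Hl1 Hub lpos llt1 *.
set s := Num.sqrt (1 - l1) in gsdef.
have s0 : 0 < s by rewrite sqrtr_gt0 subr_gt0.
have l1E : l1 = 1 - s ^+ 2 by rewrite sqr_sqrtr ?subr_ge0 ?(ltW llt1) //; ring.
have s1 : s < 1.
  rewrite ltNge; apply/negP => h; have : 1 * 1 <= s * s by apply: ler_pM.
  rewrite -expr2; lra.
have s10 : 1 + s != 0 by rewrite gt_eqF //; lra.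
have gsE : gs - 1 = (1 - s) / (1 + s) by rewrite gsdef; field.
have gs1 : 1 < gs.
  by rewrite -subr_gt0 gsE divr_gt0 //; lra.
have gs2 : gs < 2.
  have : 2 - gs = 2 * s / (1 + s) by rewrite gsdef; field.
  by move=> h; rewrite -subr_gt0 h divr_gt0 //; lra.
have hw : gs ^+ 2 * l1 = 4 * (gs - 1).
  by rewrite gsdef l1E; field.
have Hrad : forall g, 0 < g -> gs - 1 <= spectral_radius (gd_iter_mx C g g).
  move=> g g0; have [z [Hz hz]] := lower Hl1 lpos gs1 gs2 hw g0.
  have [z' [_ [-> hz']]] := srad_max (ex_intro _ z Hz).
  exact: le_trans hz (hz' _ Hz).
have Hgs : spectral_radius (gd_iter_mx C gs gs) = gs - 1.
  have g0 : 0 < gs by lra.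
  have [z [Hz hz]] := lower Hl1 lpos gs1 gs2 hw g0.
  have [z' [Hz' [-> hz']]] := srad_max (ex_intro _ z Hz).
  have u := upper Hub gs1 hw Hz'.
  have u2 := le_trans hz (hz' _ Hz).
  apply/eqP; rewrite eq_le u u2.
  done.
split; last first.
  split; last exact: Hgs.
  by move=> g g0; rewrite Hgs; exact: Hrad g g0.
move/eigenvalueP: (Hl1) => [v Hv v0].
set x := v *m C.
have Hx : x *m C^T *m C = l1 *: x.
  by rewrite /x -[v *m C *m C^T]mulmxA Hv -scalemxAl.
have x0 : x != 0.
  apply/negP => /eqP h; have : x *m C^T = l1 *: v by rewrite /x -mulmxA Hv.
  rewrite h mul0mx => /eqP; rewrite eq_sym scaler_eq0 (negPf v0) orbF gt_eqF //.
have He : ceigenvalue (gd_iter_mx C 1 1) (real_complex R l1).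
  rewrite ceig_real gdE; apply: (GM_eig x0 Hx); first by rewrite gt_eqF.
    by rewrite addrK gt_eqF.
  by rewrite addrK expr1n mul1r expr2.
have [z' [Hz' [-> hz']]] := srad_max (ex_intro _ _ He).
apply: (lt_le_trans _ (hz' _ He)).
rewrite (_ : real_complex R l1 = complex.Complex l1 0) // cmodE expr0n /= addr0 sqrtr_sqr.
rewrite ger0_norm ?(ltW lpos) //.
have : l1 - (gs - 1) = (1 - s) * s * (2 + s) / (1 + s) by rewrite gsE l1E; field.
move=> h; rewrite -subr_gt0 h divr_gt0 // ?mulr_gt0 //; lra.
Qed.
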